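(* Let $n\geqslant 2$ and let $\alpha\in\mathcal{PMI}_n\setminus\mathcal{POI}_n$ have rank $n-1$. Then: (1) if $n\equiv 0$ or $n\equiv 3 \pmod 4$, then $\alpha\in\mathcal{AM}_n$ if and only if $\mathrm{d}(\alpha)$ and $\mathrm{i}(\alpha)$ have distinct parities; (2) if $n\equiv 1$ or $n\equiv 2\pmod 4$, then $\alpha\in\mathcal{AM}_n$ if and only if $\mathrm{d}(\alpha)$ and $\mathrm{i}(\alpha)$ have the same parity.
   Context: Let $\Omega_n=\{1<2<\cdots<n\}$ and $\mathcal{I}_n$ the monoid of all partial injective maps of $\Omega_n$; the rank of $\alpha$ is $|\mathrm{Im}(\alpha)|$. $\mathcal{AI}_n$ is the set of all $\alpha\in\mathcal{I}_n$ with $\alpha=\sigma|_{\mathrm{Dom}(\alpha)}$ for some even permutation $\sigma$ of $\Omega_n$. $\mathcal{POI}_n$ is the set of order-preserving elements of $\mathcal{I}_n$; $\mathcal{PMI}_n$ is the set of monotone elements (order-preserving or order-reversing, where order-reversing means $x\leqslant y$ implies $x\alpha\geqslant y\alpha$ on the domain). $\mathcal{AM}_n=\mathcal{AI}_n\cap\mathcal{PMI}_n$. For $\alpha$ of rank $n-1$, $\mathrm{d}(\alpha)$ is the unique element of $\Omega_n\setminus\mathrm{Dom}(\alpha)$ and $\mathrm{i}(\alpha)$ is the unique element of $\Omega_n\setminus\mathrm{Im}(\alpha)$. *)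

(* Defs.v *)
(* Omega_n = {1 < ... < n} is modelled by 'I_n, with the
   ordinal k standing for the element k+1 of Omega_n (order is preserved). *)
From mathcomp Require Import all_boot all_order all_fingroup.
Set Implicit Arguments. Unset Strict Implicit. Unset Printing Implicit Defensive.

Definition ptrans (n : nat) := {ffun 'I_n -> option 'I_n}.

Definition pdom n (a : ptrans n) : {set 'I_n} := [set x | a x != None].
Definition pim n (a : ptrans n) : {set 'I_n} :=
  [set y | [exists x, a x == Some y]].
Definition prank n (a : ptrans n) : nat := #|pim a|.

Definition is_pinj n (a : ptrans n) : Prop :=
  forall x y z, a x = Some z -> a y = Some z -> x = y.

Definition order_preserving n (a : ptrans n) : Prop :=
  forall x y fx fy, a x = Some fx -> a y = Some fy ->
    (x <= y)%N -> (fx <= fy)%N.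

Definition order_reversing n (a : ptrans n) : Prop :=
  forall x y fx fy, a x = Some fx -> a y = Some fy ->
    (x <= y)%N -> (fy <= fx)%N.

Definition in_POI n (a : ptrans n) : Prop := is_pinj a /\ order_preserving a.
Definition in_PMI n (a : ptrans n) : Prop :=
  is_pinj a /\ (order_preserving a \/ order_reversing a).
Definition in_AI n (a : ptrans n) : Prop :=
  is_pinj a /\
  exists s : 'S_n, ~~ odd_perm s /\ forall x, x \in pdom a -> a x = Some (s x).
Definition in_AM n (a : ptrans n) : Prop := in_AI a /\ in_PMI a.

(* Main.v *)
Require Import Defs.
From mathcomp Require Import all_boot all_order all_fingroup.
From mathcomp Require Import zify.
Set Implicit Arguments. Unset Strict Implicit. Unset Printing Implicit Defensive.

Definition revp k : 'S_k := perm (@rev_ord_inj k).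

Lemma revpS k : revp k.+1 = lift_perm ord0 ord_max (revp k).
Proof.
apply/permP => x; case: (unliftP ord0 x) => [y|] ->.
  rewrite lift_perm_lift !permE; apply/val_inj => /=.
  rewrite /bump /=; case: y => y Hy /=. lia.
by rewrite lift_perm_id permE; apply/val_inj => /=; lia.
Qed.

Lemma odd_revp k : odd_perm (revp k) = (k %% 4 == 2) || (k %% 4 == 3).
Proof.
elim: k => [|k IH].
  by rewrite (_ : revp 0 = 1%g) ?odd_perm1 //; apply/permP => -[].
rewrite revpS odd_lift_perm /= IH.
have := ltn_mod k 4. have := modnS k 4. have := odd_mod k (erefl false : odd 4 = false). rewrite dvdn_eq. case: (k.+1 %/ 4 * 4 == k.+1); case: (odd k); case: (k %% 4 == 2) /eqP; case: (k %% 4 == 3) /eqP; move=> /=; lia.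
Qed.
Lemma decr_rev m (g : 'I_m -> 'I_m) :
  (forall x y : 'I_m, x < y -> g y < g x) -> forall x, g x = rev_ord x.
Proof.
move=> Hg.
have A : forall j (x : 'I_m), x + j < m -> j <= g x.
  elim=> [//|j IH] x Hx.
  have Hx1 : x.+1 < m by lia.
  have := IH (Ordinal Hx1) ltac:(rewrite /=; lia).
  have := Hg x (Ordinal Hx1) (ltnSn x). lia.
have B : forall j (x : 'I_m), j <= x -> g x + j <= m.-1.
  elim=> [|j IH] x Hx.
    have := ltn_ord (g x); lia.
  have Hx1 : x.-1 < m by have := ltn_ord x; lia.
  have := IH (Ordinal Hx1) ltac:(rewrite /=; lia).
  have := Hg (Ordinal Hx1) x ltac:(rewrite /=; lia). lia.
move=> x; apply/val_inj => /=.
have := A (m - x.+1) x ltac:(have := ltn_ord x; lia).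
have := B x x (leqnn _). have := ltn_ord x. lia.
Qed.

Lemma lift_ltE n (h : 'I_n) (x y : 'I_n.-1) : (lift h x < lift h y) = (x < y).
Proof.
rewrite /= /bump; case: (leqP h x); case: (leqP h y) => /= ? ?; apply/idP/idP; lia.
Qed.

Theorem proposition2p2 (n : nat) (a : ptrans n) (d i : 'I_n) :
  (2 <= n)%N ->
  in_PMI a -> ~ in_POI a ->
  prank a = n.-1 ->
  d \notin pdom a -> i \notin pim a ->
  ((n %% 4 = 0 \/ n %% 4 = 3)%N ->
     (in_AM a <-> odd (nat_of_ord d).+1 != odd (nat_of_ord i).+1)) /\
  ((n %% 4 = 1 \/ n %% 4 = 2)%N ->
     (in_AM a <-> odd (nat_of_ord d).+1 = odd (nat_of_ord i).+1)).
Proof.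
case: n a d i => [|[|m]] a d i Hn //.
move=> HPMI HnPOI Hrk Hd Hi.
have HPMI' := HPMI; case: HPMI' => Hinj [Hp|Hr]; first by case: HnPOI.
have H1 : forall x y, a x = Some y -> y != i.
  move=> x y Hxy; apply: contraNneq Hi => <-; rewrite inE; apply/existsP.
  by exists x; rewrite Hxy.
have H2 : forall x, x != d -> a x != None.
  move=> x Hx; apply/negP => /eqP Hax.
  have S1 : pim a \subset (fun z => odflt z (a z)) @: pdom a.
    apply/subsetP => y; rewrite inE => /existsP [z /eqP Hz].
    apply/imsetP; exists z; first by rewrite inE Hz.
    by rewrite Hz.
  have S2 : pdom a \subset ~: [set d; x].
    apply/subsetP => z; rewrite !inE => Hz.
    apply/negP => /orP [/eqP Ez|/eqP Ez]; subst z.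
      by move: Hd; rewrite inE Hz.
    by move: Hz; rewrite Hax.
  have := subset_leq_card S1; have := leq_imset_card (fun z => odflt z (a z)) (pdom a).
  have := subset_leq_card S2; have := cardsC [set d; x]; rewrite cards2 card_ord.
  rewrite /prank in Hrk; rewrite Hrk; rewrite eq_sym in Hx; rewrite Hx /=. move=> E1 L1 L2 L3; have L := leq_trans L3 (leq_trans L2 L1); move: E1 L; set c := #|~: _|; lia.
pose g (k : 'I_m.+1) : 'I_m.+1 := odflt ord0 (obind (unlift i) (a (lift d k))).
have Hg : forall k, a (lift d k) = Some (lift i (g k)).
  move=> k; have := H2 (lift d k) (negbT (lift_eqF _ _ )); rewrite /g.
  case E: (a (lift d k)) => [y|] // _ /=.
  have := H1 _ _ E; case: (unliftP i y) => [z|] -> //=; by rewrite eqxx.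
have Hgdec : forall x y : 'I_m.+1, x < y -> g y < g x.
  move=> x y Hxy.
  have HXY : lift d x < lift d y by rewrite lift_ltE.
  have Hle := Hr _ _ _ _ (Hg x) (Hg y) (ltnW HXY).
  rewrite -(lift_ltE i) ltn_neqAle Hle andbT.
  apply/negP => /eqP /val_inj E.
  have Exy := Hinj _ _ _ (Hg x) (etrans (Hg y) (congr1 Some E)).
  by move: HXY; rewrite Exy ltnn.
have Hgrev := decr_rev Hgdec.
pose s := lift_perm d i (revp m.+1).
have Hs : forall x, x \in pdom a -> a x = Some (s x).
  move=> x Hx; case: (unliftP d x) => [k|] Ex; last by move: Hd; rewrite -Ex Hx.
  by rewrite Ex /s lift_perm_lift Hg Hgrev permE.
have Key : in_AM a <-> ~~ odd_perm s.
  split.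
    move=> [[_ [t [Ht Hta]]] _].
    suff -> : s = t by [].
    apply/permP => x.
    case: (boolP (x == d)) => [/eqP ->|Hx]; last first.
      have Hx' : x \in pdom a by rewrite inE H2.
      by move: (Hta x Hx'); rewrite Hs // => -[].
    set z := (s^-1 (t d))%g.
    case: (boolP (z == d)) => [/eqP Hz|Hz].
      by rewrite -{1}Hz /z permKV.
    have Hz' : z \in pdom a by rewrite inE H2.
    have := Hta z Hz'; rewrite Hs // /z permKV => -[] /perm_inj E.
    by move: Hz; rewrite /z -E eqxx.
  move=> Hsev; split => //; split => //; by exists s.
rewrite /s odd_lift_perm odd_revp in Key.
split => Hm; rewrite Key /=.
  have -> : ((m.+1 %% 4 == 2) || (m.+1 %% 4 == 3)) = true by lia.
  by case: (odd d); case: (odd i).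
have -> : ((m.+1 %% 4 == 2) || (m.+1 %% 4 == 3)) = false by lia.
by case: (odd d); case: (odd i).
Qed.
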